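(* Let $f_\lambda$ be a probability density on $(0,\infty)$ with finite mean $\mu_\lambda$. Let $P_p$ be a probability distribution on $\{1,\dots,N\}$ with mean $E_p[n]=\sum_n n\,P_p(n)$, and for each $n$ let $g(\cdot\mid n)$ be a probability distribution on $\{0,1,\dots,N\}$ with mean $\overline{g}(n)=\sum_m m\,g(m\mid n)$. Consider random variables $(N_p,N_a,X,T)$ such that: $P\{N_p=n\}=\frac{n}{E_p[n]}P_p(n)$; conditionally on $N_p=n$, $N_a$ has distribution $g(\cdot\mid n)$; conditionally on $N_a=m$, $X$ is distributed as $\lambda_1+\dots+\lambda_m$ with $\lambda_1,\dots,\lambda_m$ i.i.d. with density $f_\lambda$ ($X=0$ if $m=0$); conditionally on $X=x$, $T$ is exponentially distributed with rate $x$ ($T=+\infty$ if $x=0$). Then, with the convention $1/0=+\infty$, $$E[T]\ \ge\ \frac{1}{\mu_\lambda\, E_p[n]}\; E_p\!\left[\frac{n}{\overline{g}(n)}\right],$$ where $E_p[h(n)]=\sum_n h(n)P_p(n)$.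
   Context: This models the content access delay $T$ of a random content request in an opportunistic network: $P_p(n)$ is the fraction of contents requested by exactly $n$ nodes (content popularity distribution), $g(m\mid n)$ is the probability that a content of popularity $n$ is held by $m$ nodes (availability given popularity), $f_\lambda$ is the distribution of pairwise contact rates (inter-contact times are exponential), and $X$ is the sum of the contact rates between the requester and the $N_a$ holders. *)

(* Defs.v *)
From HB Require Import structures.
From mathcomp Require Import all_boot all_order all_algebra.
From mathcomp Require Import all_classical all_reals all_analysis.
Set Implicit Arguments. Unset Strict Implicit. Unset Printing Implicit Defensive.
Import Order.TTheory GRing.Theory Num.Theory.
Import numFieldNormedType.Exports.
Local Open Scope classical_set_scope.
Local Open Scope ring_scope.

(* Mean of an exponential random variable T with rate x, computed from the
   library's exponential density; T = +oo (hence mean +oo) when the rate is 0. *)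
Definition exp_mean {R : realType} (x : R) : \bar R :=
  if 0 < x then (\int[@lebesgue_measure R]_(t in `[0%R, +oo[)
                   (t * exponential_pdf x t)%:E)%E
  else +oo%E.

(* iid_mean f h m s = E[ h (s + lambda_1 + ... + lambda_m) ] where the
   lambda_i are i.i.d. with density f on (0, +oo) (iterated integrals,
   i.e. integration against the m-fold product of the law f(x)dx). *)
Fixpoint iid_mean {R : realType} (f : R -> R) (h : R -> \bar R) (m : nat)
  (s : R) : \bar R :=
  match m with
  | 0%N => h s
  | m'.+1 => (\int[@lebesgue_measure R]_(l in `]0%R, +oo[)
                 ((f l)%:E * iid_mean f h m' (s + l)))%E
  end.

Definition Ep {R : realType} (N : nat) (Pp : nat -> R) : R :=
  \sum_(1 <= n < N.+1) n%:R * Pp n.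

(* gbar(n) = sum_{m=0}^N m g(m|n);  g m n stands for g(m | n). *)
Definition gbar {R : realType} (N : nat) (g : nat -> nat -> R) (n : nat) : R :=
  \sum_(0 <= m < N.+1) m%:R * g m n.

(* E[T] for the hierarchical model:
   P{N_p = n} = n P_p(n) / E_p[n],  N_a | N_p = n ~ g(. | n),
   X | N_a = m ~ lambda_1 + ... + lambda_m  (iid density f),
   T | X = x ~ Exp(x)   (T = +oo if x = 0). *)
Definition ET {R : realType} (N : nat) (f : R -> R) (Pp : nat -> R)
  (g : nat -> nat -> R) : \bar R :=
  (\sum_(1 <= n < N.+1) \sum_(0 <= m < N.+1)
     ((n%:R * Pp n / Ep N Pp) * g m n)%:E * iid_mean f exp_mean m 0)%E.

Definition ediv_inf {R : realType} (a b : R) : \bar R :=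
  if b == 0 then +oo%E else (a / b)%:E.

(* Main.v *)
Require Import Defs.
From HB Require Import structures.
From mathcomp Require Import all_boot all_order all_algebra.
From mathcomp Require Import all_classical all_reals all_analysis.
Import Order.TTheory GRing.Theory Num.Theory.
Import numFieldNormedType.Exports.
Local Open Scope classical_set_scope.
Local Open Scope ring_scope.
From mathcomp Require Import ring lra measurable_realfun.
Lemma le_int_nm d (T : measurableType d) (R : realType) (mu : {measure set T -> \bar R})
  (D : set T) (f1 f2 : T -> \bar R) :
  (forall x, D x -> 0 <= f1 x)%E -> (forall x, D x -> f1 x <= f2 x)%E ->
  (\int[mu]_(x in D) f1 x <= \int[mu]_(x in D) f2 x)%E.
Proof.
move=> f10 f12.
have f20 : forall x, D x -> (0 <= f2 x)%E.
  by move=> x Dx; apply: le_trans (f10 x Dx) (f12 x Dx).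
rewrite !ge0_integralE//; apply: ereal_sup_le => _ [h /= hle <-].
exists h => //= x; apply: le_trans (hle x) _.
rewrite /patch; case: ifP => // /set_mem; exact: f12.
Qed.

Lemma dlin (R : realType) (k t : R) : is_derive t 1 (fun t : R => k * t) k.
Proof.
have := @is_deriveZ R R R^o id k t 1 1 (is_derive_id _ _).
by rewrite /GRing.scale/= mulr1.
Qed.
Lemma dE (R : realType) (x t : R) :
  is_derive t 1 (fun t : R => expR (- x * t)) (expR (- x * t) * (- x)).
Proof.
have H := (@is_derive1_comp R expR (fun t => - x * t) t _ _ (is_derive_expR _) (dlin _ _ _)).
exact H.
Qed.

Lemma dF (R : realType) (x c t : R) :
  is_derive t 1 (fun t : R => - ((t + c) * expR (- x * t)))
    (- (expR (- x * t) + (t + c) * (expR (- x * t) * (- x)))).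
Proof.
apply: is_deriveN.
have h1 : is_derive t 1 (fun t : R => t + c) 1.
  have H := is_deriveD (is_derive_id t 1) (is_derive_cst c t 1).
  rewrite addr0 in H; exact H.
have H := is_deriveM h1 (dE _ x t).
rewrite /GRing.scale/= mulr1 addrC in H; exact H.
Qed.
Lemma lim_tE (R : realType) (x c : R) : 0 < x -> 0 <= c ->
  (t + c) * expR (- x * t) @[t --> +oo] --> (0:R).
Proof.
move=> x0 c0.
have Vt : (t^-1 : R) @[t --> +oo] --> (0:R).
  apply/(@gtr0_cvgV0 R R _ _ id).
    by near=> t; near: t; apply: nbhs_pinfty_gt; rewrite num_real.
  exact: cvg_id.
have KVt : (4 / x ^+ 2 * t^-1 : R) @[t --> +oo] --> (0:R).
  rewrite -(mulr0 (4 / x ^+ 2)); apply: cvgM => //; exact: cvg_cst.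
apply: (squeeze_cvgr _ (cvg_cst 0) KVt).
near=> t.
have tc : c <= t by near: t; apply: nbhs_pinfty_ge; rewrite num_real.
have t0 : 0 < t by near: t; apply: nbhs_pinfty_gt; rewrite num_real.
have xt0 : 0 <= x * t by rewrite mulr_ge0 ?ltW.
have Eb := expR_ge1Dxn 1 xt0.
rewrite mulNr expRN.
have f2 : (2`!)%:R = 2 :> R by [].
rewrite f2 in Eb.
set E := expR (x * t) in Eb *.
have E0 : 0 < E by rewrite expR_gt0.
apply/andP; split.
  apply: mulr_ge0; [by rewrite addr_ge0// ltW | by rewrite invr_ge0 ltW].
have key : (t + c) * (x ^+ 2 * t) <= 4 * E.
  nra.
rewrite ler_pdivrMr//.
have -> : 4 / x ^+ 2 / t * E = (4 * E) / (x ^+ 2 * t).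
  by field; rewrite ?gt_eqF// ?exprn_gt0.
by rewrite ler_pdivlMr ?mulr_gt0 ?exprn_gt0.
Unshelve. all: by end_near.
Qed.

Lemma cE (R : realType) (x t : R) : {for t, continuous (fun t : R => expR (- x * t))}.
Proof.
have [d _] := dE _ x t.
exact/differentiable_continuous/derivable1_diffP.
Qed.

Lemma exp_mean_eq (R : realType) (x : R) : 0 < x -> exp_mean x = (x^-1)%:E.
Proof.
move=> x0; rewrite /exp_mean x0.
have -> : (\int[@lebesgue_measure R]_(t in `[0%R, +oo[) (t * exponential_pdf x t)%:E)%E
   = (\int[lebesgue_measure]_(t in `[0%R, +oo[) (t * (x * expR (- x * t)))%:E)%E.
  apply: eq_integral => t; rewrite inE/= in_itv/= andbT => t0.
  by rewrite exponential_pdfE.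
rewrite (@ge0_continuous_FTC2y R (fun t => t * (x * expR (- x * t)))
  (fun t => - ((t + x^-1) * expR (- x * t))) 0 0).
- rewrite -EFinB; congr EFin.
  rewrite mulr0 expR0 mulr1.
  by rewrite opprK !add0r.
- move=> t t0; apply: mulr_ge0 => //; apply: mulr_ge0; [exact: ltW|exact: expR_ge0].
- apply: continuous_subspaceT => t.
  apply: cvgM; first exact: cvg_id.
  apply: cvgM; first exact: cvg_cst.
  exact: cE.
- rewrite -oppr0; apply: cvgN; apply: lim_tE => //; by rewrite invr_ge0 ltW.
- move=> t _; have [d _] := dF _ x x^-1 t; exact: d.
- apply: cvg_at_right_filter.
  have [d _] := dF _ x x^-1 0.
  have c0 : {for 0, continuous (fun t : R => - ((t + x^-1) * expR (- x * t)))}.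
    by apply: differentiable_continuous; exact/derivable1_diffP.
  exact: c0.
- move=> t _; rewrite derive1E; have [_ ->] := dF _ x x^-1 t.
  by field; rewrite gt_eqF.
Qed.

Local Notation D0 R := (`]0%R, +oo[%classic : set R).

Lemma mV (R : realType) (c : R) : 0 <= c ->
  measurable_fun (D0 R) (fun l : R => (c + l)^-1).
Proof.
move=> c0; apply: measurable_realfun.open_continuous_measurable_fun; first exact: interval_open.
move=> l; rewrite inE/= in_itv/= andbT => l0.
apply: continuousV; first by rewrite gt_eqF// ltr_wpDl.
by apply: cvgD; [exact: cvg_cst | exact: cvg_id].
Qed.

Lemma mlin (R : realType) (c : R) : measurable_fun (D0 R) (fun l : R => c + l).
Proof.
apply: measurable_realfun.open_continuous_measurable_fun; first exact: interval_open.
by move=> l _; apply: cvgD; [exact: cvg_cst | exact: cvg_id].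
Qed.

Lemma mD0 (R : realType) : measurable ((D0 R) : set R).
Proof. exact: measurable_itv. Qed.

Lemma tangent (R : realType) (a y : R) : 0 < a -> 0 < y ->
  2 / a <= y^-1 + y / a ^+ 2.
Proof.
move=> a0 y0.
have -> : y^-1 + y / a ^+ 2 = 2 / a + (y - a) ^+ 2 / (y * a ^+ 2).
  by field; rewrite ?gt_eqF.
by rewrite lerDl divr_ge0 ?sqr_ge0// ltW// mulr_gt0// exprn_gt0.
Qed.

Lemma jensen1 (R : realType) (f : R -> R) (mu c : R) :
  measurable_fun (D0 R) f -> (forall x, 0 < x -> 0 <= f x) ->
  (\int[@lebesgue_measure R]_(x in (D0 R)) (f x)%:E = 1)%E ->
  (\int[@lebesgue_measure R]_(x in (D0 R)) (x * f x)%:E = mu%:E)%E ->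
  0 < mu -> 0 <= c ->
  (((c + mu)^-1)%:E <= \int[@lebesgue_measure R]_(l in (D0 R)) (f l * (c + l)^-1)%:E)%E.
Proof.
move=> mf f0 If Imu mu0 c0.
set a := c + mu.
have a0 : 0 < a by rewrite ltr_wpDl.
have f0' : forall x, (D0 R) x -> 0 <= f x.
  by move=> x; rewrite /= in_itv/= andbT; exact: f0.
have mEf : measurable_fun (D0 R) (EFin \o f) by exact/measurable_EFinP.
have mEx : measurable_fun (D0 R) (EFin \o (fun x => x * f x)).
  apply/measurable_EFinP; apply: measurable_funM => //; exact: measurable_id.
have ge0x : forall x, (D0 R) x -> (0 <= (x * f x)%:E)%E.
  move=> x Dx; rewrite lee_fin mulr_ge0 ?f0'//.
  by move: Dx; rewrite /= in_itv/= andbT => /ltW.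
have ge0f : forall x, (D0 R) x -> (0 <= (f x)%:E)%E by move=> x Dx; rewrite lee_fin f0'.
have I2 : (\int[@lebesgue_measure R]_(l in (D0 R)) (f l * (c + l) / a ^+ 2)%:E = (a^-1)%:E)%E.
  transitivity (\int[@lebesgue_measure R]_(l in (D0 R))
     (((a ^+ 2)^-1)%:E * ((c%:E * (f l)%:E) + (l * f l)%:E)))%E.
    apply: eq_integral => l _.
    rewrite -[RHS]/((a ^- 2 * (c * f l + l * f l))%:E); congr EFin.
    by field; rewrite gt_eqF.
  rewrite ge0_integralZl_EFin//; last 3 first.
  - move=> x Dx; apply: adde_ge0; last exact: ge0x.
    by apply: mule_ge0; rewrite ?lee_fin// f0'.
  - apply: emeasurable_funD => //.
    by apply: measurable_funeM.
  - by rewrite invr_ge0 exprn_ge0// ltW.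
  rewrite ge0_integralD//; last 2 first.
  - by move=> x Dx; apply: mule_ge0; rewrite ?lee_fin// f0'.
  - exact: measurable_funeM.
  rewrite ge0_integralZl_EFin// If Imu mule1 -EFinD -EFinM.
  by congr EFin; rewrite /a; field; rewrite gt_eqF.
have m1 : measurable_fun (D0 R) (EFin \o (fun l => f l * (c + l)^-1)).
  by apply/measurable_EFinP; apply: measurable_funM => //; exact: mV.
have m2 : measurable_fun (D0 R) (EFin \o (fun l => f l * (c + l) / a ^+ 2)).
  apply/measurable_EFinP.
  apply: (measurable_funM (f := fun l => f l * (c + l)) (g := cst ((a ^+ 2)^-1))).
    by apply: measurable_funM => //; exact: mlin.
  exact: measurable_cst.
have Dpos : forall l, (D0 R) l -> 0 < l by move=> l; rewrite /= in_itv/= andbT.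
have p1 : forall l, (D0 R) l -> (0 <= (f l * (c + l)^-1)%:E)%E.
  move=> l Dl; rewrite lee_fin mulr_ge0 ?f0'// invr_ge0 addr_ge0// ltW//; exact: Dpos.
have p2 : forall l, (D0 R) l -> (0 <= (f l * (c + l) / a ^+ 2)%:E)%E.
  move=> l Dl; rewrite lee_fin.
  apply: mulr_ge0; last by rewrite invr_ge0 exprn_ge0// ltW.
  apply: mulr_ge0; first exact: f0'.
  by rewrite addr_ge0// ltW//; exact: Dpos.
have H : ((2 / a)%:E <= \int[@lebesgue_measure R]_(l in (D0 R)) (f l * (c + l)^-1)%:E
     + \int[@lebesgue_measure R]_(l in (D0 R)) (f l * (c + l) / a ^+ 2)%:E)%E.
  rewrite -ge0_integralD//.
  apply: (@le_trans _ _ (\int[@lebesgue_measure R]_(l in (D0 R)) ((2 / a)%:E * (f l)%:E))%E).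
    rewrite ge0_integralZl_EFin// ?If ?mule1//.
    by rewrite divr_ge0// ltW.
  apply: le_int_nm.
    by move=> l Dl; rewrite mule_ge0// ?ge0f// lee_fin divr_ge0// ltW.
  move=> l Dl.
  rewrite -[X in (X <= _)%E]/((2 / a * f l)%:E).
  rewrite -[X in (_ <= X)%E]/((f l * (c + l)^-1 + f l * (c + l) / a ^+ 2)%:E).
  rewrite lee_fin.
  have -> : f l * (c + l)^-1 + f l * (c + l) / a ^+ 2 = f l * ((c + l)^-1 + (c + l) / a ^+ 2).
    by ring.
  rewrite [X in X <= _]mulrC ler_wpM2l ?f0'//.
  by apply: tangent => //; rewrite ltr_wpDl// Dpos.
rewrite I2 in H.
have -> : (a^-1)%:E = ((2 / a)%:E - (a^-1)%:E)%E.
  by rewrite -EFinB; congr EFin; field; rewrite gt_eqF.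
by rewrite leeBlDl// addeC.
Qed.

Definition phi {R : realType} (y : R) : \bar R := if 0 < y then (y^-1)%:E else +oo%E.

Lemma exp_mean_phi (R : realType) (s : R) : exp_mean s = phi s.
Proof.
rewrite /phi; case: ifP => s0; first exact: exp_mean_eq.
by rewrite /exp_mean s0.
Qed.

Lemma iid_ge0 (R : realType) (f : R -> R) : (forall x, 0 < x -> 0 <= f x) ->
  forall m s, (0 <= iid_mean f exp_mean m s)%E.
Proof.
move=> f0; elim=> [|m IH] s /=.
  rewrite exp_mean_phi /phi; case: ifP => s0 //.
  by rewrite lee_fin invr_ge0 ltW.
apply: integral_ge0 => l; rewrite /= in_itv/= andbT => l0.
by apply: mule_ge0 => //; rewrite lee_fin f0.
Qed.

Lemma iid_lb (R : realType) (f : R -> R) (mu : R) :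
  measurable_fun (D0 R) f -> (forall x, 0 < x -> 0 <= f x) ->
  (\int[@lebesgue_measure R]_(x in (D0 R)) (f x)%:E = 1)%E ->
  (\int[@lebesgue_measure R]_(x in (D0 R)) (x * f x)%:E = mu%:E)%E ->
  0 < mu -> forall m s, 0 <= s ->
  (phi (s + m%:R * mu) <= iid_mean f exp_mean m s)%E.
Proof.
move=> mf f0 If Imu mu0; elim=> [|m IH] s s0.
  by rewrite mul0r addr0 /= exp_mean_phi.
rewrite /phi ifT; last by rewrite ltr_wpDl// mulr_gt0.
have cm0 : 0 <= s + m%:R * mu by rewrite addr_ge0// mulr_ge0// ltW.
rewrite /=.
have J := (@jensen1 R f mu _ mf f0 If Imu mu0 cm0).
have -> : s + m.+1%:R * mu = s + m%:R * mu + mu by rewrite mulrSr mulrDl mul1r addrA.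
apply: (le_trans J).
apply: le_int_nm.
  move=> l; rewrite /= in_itv/= andbT => l0; rewrite lee_fin mulr_ge0 ?f0//.
  by rewrite invr_ge0 addr_ge0// ltW.
move=> l; rewrite /= in_itv/= andbT => l0.
rewrite -[X in (X <= _)%E]/(((f l)%:E * ((s + m%:R * mu + l)^-1)%:E)%E).
apply: lee_pmul => //; first by rewrite lee_fin f0.
  by rewrite lee_fin invr_ge0 addr_ge0// ltW.
apply: le_trans (IH (s + l) _); last by rewrite addr_ge0// ltW.
rewrite /phi ifT; last by rewrite ltr_wpDr// ?mulr_ge0// ?ltW// ltr_wpDl.
by rewrite -addrA (addrC (m%:R * mu)) addrA.
Qed.

Lemma lee_sum_nat (R : realType) (a b : nat) (F G : nat -> \bar R) :
  (forall i, (a <= i < b)%N -> (F i <= G i)%E) ->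
  (\sum_(a <= i < b) F i <= \sum_(a <= i < b) G i)%E.
Proof.
move=> h; rewrite big_nat_cond [leRHS]big_nat_cond.
by apply: lee_sum => i /andP[+ _]; exact: h.
Qed.

Lemma real_part (R : realType) (N n : nat) (g : nat -> nat -> R) :
  (forall m, (m <= N)%N -> 0 <= g m n) -> \sum_(0 <= m < N.+1) g m n = 1 ->
  g 0%N n = 0 ->
  1 <= gbar N g n /\ (gbar N g n)^-1 <= \sum_(0 <= m < N.+1) g m n * (m%:R)^-1.
Proof.
move=> g0 g1 g00.
have G1 : 1 <= gbar N g n.
  rewrite -g1 /gbar; apply: ler_sum_nat => i /andP[_ iN].
  case: i iN => [|i] iN; first by rewrite g00 mulr0.
  by rewrite ler_peMl ?g0// ler1n.
split => //.
set G := gbar N g n.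
have G0 : 0 < G by apply: lt_le_trans G1.
apply: (@le_trans _ _ (\sum_(0 <= m < N.+1) g m n * (2 / G - m%:R / G ^+ 2))).
  have -> : \sum_(0 <= m < N.+1) g m n * (2 / G - m%:R / G ^+ 2)
      = 2 / G * (\sum_(0 <= m < N.+1) g m n) - (\sum_(0 <= m < N.+1) m%:R * g m n) / G ^+ 2.
    rewrite mulr_sumr mulr_suml -sumrB; apply: eq_bigr => i _; ring.
  rewrite g1 -/(gbar N g n) -/G.
  by rewrite le_eqVlt; apply/orP; left; apply/eqP; field; rewrite gt_eqF.
apply: ler_sum_nat => i /andP[_ iN].
case: i iN => [|i] iN; first by rewrite g00 !mul0r.
apply: ler_wpM2l; first exact: g0.
rewrite lerBlDr.
by apply: tangent => //; rewrite ltr0n.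
Qed.

Lemma per_n (R : realType) (N n : nat) (mu Epv : R) (Pp : nat -> R)
  (g : nat -> nat -> R) (I : nat -> \bar R) :
  0 < mu -> 0 < Epv -> (1 <= n)%N -> 0 <= Pp n ->
  (forall m, (m <= N)%N -> 0 <= g m n) -> \sum_(0 <= m < N.+1) g m n = 1 ->
  (forall m, (0 <= I m)%E) -> I 0%N = +oo%E ->
  (forall m, (0 < m)%N -> (((m%:R * mu)^-1)%:E <= I m)%E) ->
  (((mu * Epv)^-1)%:E * ((Pp n)%:E * ediv_inf n%:R (gbar N g n)) <=
   \sum_(0 <= m < N.+1) ((n%:R * Pp n / Epv) * g m n)%:E * I m)%E.
Proof.
move=> mu0 Ep0 n1 Pn0 g0 g1 I0 Ioo Ilb.
set w := n%:R * Pp n / Epv.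
have w0 : 0 <= w by rewrite /w; apply: divr_ge0; [apply: mulr_ge0 | apply: ltW].
have g00 : 0 <= g 0%N n by apply: g0.
have Sge0 : forall k, (0 <= \sum_(k <= m < N.+1) ((w * g m n)%:E * I m))%E.
  move=> k; rewrite big_nat_cond; apply: sume_ge0 => m /andP[/andP[_ mN] _].
  by apply: mule_ge0 => //; rewrite lee_fin mulr_ge0// g0// -ltnS.
have [wg0|] := ltP 0 (w * g 0%N n).
  rewrite big_ltn// Ioo.
  have ->: ((w * g 0%N n)%:E * +oo = +oo)%E by rewrite muleC gt0_mulye// lte_fin.
  rewrite addye ?leey//.
  by rewrite gt_eqF// (lt_le_trans _ (Sge0 1%N))// ltNy0.
move=> wg; have /eqP : w * g 0%N n = 0 by apply/eqP; rewrite eq_le wg mulr_ge0.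
rewrite mulf_eq0 => /orP[/eqP w00|/eqP g0z].
  have -> : Pp n = 0.
    move: w00; rewrite /w => /eqP; rewrite !mulf_eq0 invr_eq0.
    rewrite (gt_eqF Ep0) orbF pnatr_eq0.
    rewrite (_ : (n == 0%N) = false) /=; last by apply/negbTE; rewrite -lt0n.
    by move=> /eqP.
  by rewrite mul0e mule0 Sge0.
have [G1 SG] := @real_part R N n g g0 g1 g0z.
rewrite /ediv_inf ifF; last by apply/negbTE; rewrite gt_eqF// (lt_le_trans _ G1).
apply: (@le_trans _ _ (\sum_(0 <= m < N.+1) (w * g m n * (m%:R * mu)^-1)%:E)%E).
  rewrite sumEFin -!EFinM lee_fin.
  have -> : \sum_(0 <= m < N.+1) w * g m n * (m%:R * mu)^-1
     = w / mu * \sum_(0 <= m < N.+1) g m n * (m%:R)^-1.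
    rewrite mulr_sumr; apply: eq_bigr => i _; rewrite invfM; ring.
  have -> : (mu * Epv)^-1 * (Pp n * (n%:R / gbar N g n)) = w / mu * (gbar N g n)^-1.
    by rewrite /w; field; rewrite ?gt_eqF// (lt_le_trans _ G1).
  by apply: ler_wpM2l => //; rewrite divr_ge0// ltW.
apply: lee_sum_nat => i /andP[_ iN].
case: i iN => [|i] iN.
  by rewrite g0z mulr0 !mul0r mul0e.
rewrite EFinM; apply: lee_pmul => //; first by rewrite lee_fin mulr_ge0// g0.
  by rewrite lee_fin invr_ge0 mulr_ge0// ltW.
exact: Ilb.
Qed.

Theorem theorem1 (R : realType) (N : nat) (f : R -> R) (mu_l : R)
  (Pp : nat -> R) (g : nat -> nat -> R) :
  (* f is a probability density on (0, +oo) with finite mean mu_l *)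
  measurable_fun (`]0%R, +oo[ : set R) f ->
  (forall x, 0 < x -> 0 <= f x) ->
  (\int[@lebesgue_measure R]_(x in `]0%R, +oo[) (f x)%:E = 1)%E ->
  (\int[@lebesgue_measure R]_(x in `]0%R, +oo[) (x * f x)%:E = mu_l%:E)%E ->
  (* P_p is a probability distribution on {1, ..., N} *)
  (forall n, (1 <= n <= N)%N -> 0 <= Pp n) ->
  \sum_(1 <= n < N.+1) Pp n = 1 ->
  (* each g(. | n) is a probability distribution on {0, ..., N} *)
  (forall n m, (1 <= n <= N)%N -> (m <= N)%N -> 0 <= g m n) ->
  (forall n, (1 <= n <= N)%N -> \sum_(0 <= m < N.+1) g m n = 1) ->
  (ET N f Pp g >=
     ((mu_l * Ep N Pp)^-1)%:E *
     \sum_(1 <= n < N.+1) (Pp n)%:E * ediv_inf n%:R (gbar N g n))%E.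
Proof.
move=> mf f0 If Imu Pp0 Pp1 g0 g1.
have mu_ge0 : 0 <= mu_l.
  rewrite -lee_fin -Imu; apply: integral_ge0 => x; rewrite /= in_itv/= andbT => x0.
  by rewrite lee_fin; apply: mulr_ge0; [exact: ltW | exact: f0].
have Ep1 : 1 <= Ep N Pp.
  rewrite -Pp1 /Ep; apply: ler_sum_nat => i /andP[i1 iN].
  rewrite ler_peMl ?ler1n//; apply: Pp0; by rewrite i1.
have Ep0 : 0 < Ep N Pp by apply: lt_le_trans Ep1.
have ET0 : (0 <= ET N f Pp g)%E.
  rewrite /ET big_nat_cond; apply: sume_ge0 => n /andP[/andP[n1 nN] _].
  rewrite big_nat_cond; apply: sume_ge0 => m /andP[/andP[_ mN] _].
  apply: mule_ge0; last exact: iid_ge0.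
  rewrite lee_fin; apply: mulr_ge0; last by apply: g0; rewrite ?n1.
  by apply: divr_ge0; [apply: mulr_ge0 => //; apply: Pp0; rewrite n1 | exact: ltW].
have [mu00|mu_ne0] := eqVneq mu_l 0.
  by rewrite mu00 mul0r invr0 mul0e.
have mu0 : 0 < mu_l by rewrite lt_def mu_ne0 mu_ge0.
rewrite /ET big_nat_cond ge0_sume_distrr; last first.
  move=> n /andP[/andP[n1 nN] _]; apply: mule_ge0.
    by rewrite lee_fin; apply: Pp0; rewrite n1.
  rewrite /ediv_inf; case: ifP => // _; rewrite lee_fin divr_ge0//.
  rewrite /gbar big_nat_cond; apply: sumr_ge0 => m /andP[/andP[_ mN] _].
  by rewrite mulr_ge0// g0// n1.
rewrite [leRHS]big_nat_cond; apply: lee_sum => n /andP[/andP[n1 nN] _].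
have nr : (1 <= n <= N)%N by rewrite n1.
apply: (@per_n R N n mu_l (Ep N Pp) Pp g (fun m => iid_mean f exp_mean m 0)) => //.
- exact: Pp0.
- by move=> m mN; apply: g0.
- exact: g1.
- by move=> m; apply: iid_ge0.
- by rewrite /= /exp_mean ltxx.
- move=> m m0; have := @iid_lb R f mu_l mf f0 If Imu mu0 m 0 (lexx 0).
  by rewrite add0r /phi ifT// mulr_gt0// ltr0n.
Qed.
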